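(* In the setting of the context, let $P=L^-_{sym}+\tau^+I$, $\bar P=\overline{L^-_{sym}}+\tau^+I$, $Q=L^+_{sym}+\tau^-I$, $\bar Q=\overline{L^+_{sym}}+\tau^-I$, and assume $\|P-\bar P\|\le\Delta_P$ and $\|Q-\bar Q\|\le\Delta_Q$. Then $$\|T-\bar T\|\le\frac{\alpha_s^++\Delta_Q}{\tau^+}\left(\frac{\Delta_P}{\tau^+}+2\sqrt{\frac{\Delta_P}{\tau^+}}\right)+\frac{\Delta_Q}{\tau^+},$$ where $\alpha_s^+=1+\tau^-+\frac{p(1-\eta)}{d_s^+}$.
   Context: SSBM: integers $n\ge2,k\ge2$, $p\in(0,1]$, $\eta\in[0,1/2)$, partition of $[n]$ into nonempty clusters $C_1,\dots,C_k$, $|C_i|=n_i$; edges present independently w.p. $p$, signed $+1$ within and $-1$ across clusters, signs flipped independently w.p. $\eta$. $A^\pm$ positive/negative 0/1 adjacency matrices (of a realization in which all degrees are positive), $D^\pm=\mathrm{diag}(A^\pm\mathbf1)$. $\tau^+>0,\tau^-\ge0$. $L^\pm_{sym}=I-(D^\pm)^{-1/2}A^\pm(D^\pm)^{-1/2}$, $\overline{L^\pm_{sym}}=I-(\mathbb ED^\pm)^{-1/2}\mathbb EA^\pm(\mathbb ED^\pm)^{-1/2}$, $T=(L^-_{sym}+\tau^+I)^{-1/2}(L^+_{sym}+\tau^-I)(L^-_{sym}+\tau^+I)^{-1/2}$, $\bar T$ the same with overlined matrices. $d_s^+=p(ns(1-2\eta)+n\eta-(1-\eta))$ is the expected positive degree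 of a node in a smallest cluster, $s=\min_in_i/n$ (assumed positive). *)

(* Defs.v *)
From HB Require Import structures.
From mathcomp Require Import all_boot all_order all_algebra.
From mathcomp Require Import boolp classical_sets reals.
Set Implicit Arguments. Unset Strict Implicit. Unset Printing Implicit Defensive.
Import Order.TTheory GRing.Theory Num.Theory.
Local Open Scope ring_scope.
Local Open Scope classical_set_scope.

Section SSBMDefs.
Variable R : realType.

Definition vnorm (n : nat) (x : 'cV[R]_n) : R := Num.sqrt (\sum_i (x i 0) ^+ 2).

Definition opnorm (n : nat) (A : 'M[R]_n) : R :=
  sup [set vnorm (A *m x) | x in [set x : 'cV[R]_n | vnorm x <= 1]].

Definition psd (n : nat) (A : 'M[R]_n) : Prop :=
  forall x : 'cV[R]_n, 0 <= (x^T *m A *m x) 0 0.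

Definition psd_sqrt (n : nat) (M : 'M[R]_n) : 'M[R]_n :=
  xget 0 [set S : 'M[R]_n | S^T = S /\ psd S /\ S *m S = M].

Definition inv_sqrt (n : nat) (M : 'M[R]_n) : 'M[R]_n := invmx (psd_sqrt M).

Definition deg (n : nat) (A : 'M[R]_n) (i : 'I_n) : R := \sum_j A i j.
Definition diag_inv_sqrt (n : nat) (d : 'I_n -> R) : 'M[R]_n :=
  diag_mx (\row_i (Num.sqrt (d i))^-1).

Definition Lsym (n : nat) (A : 'M[R]_n) : 'M[R]_n :=
  1%:M - diag_inv_sqrt (deg A) *m A *m diag_inv_sqrt (deg A).

(* expected positive / negative adjacency matrices in the SSBM (no self loops) *)
Definition EApos (n k : nat) (c : 'I_n -> 'I_k) (p eta : R) : 'M[R]_n :=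
  \matrix_(i, j) (if i == j then 0 else if c i == c j then p * (1 - eta) else p * eta).
Definition EAneg (n k : nat) (c : 'I_n -> 'I_k) (p eta : R) : 'M[R]_n :=
  \matrix_(i, j) (if i == j then 0 else if c i == c j then p * eta else p * (1 - eta)).

Definition Tmat (n : nat) (Lpos Lneg : 'M[R]_n) (taup taum : R) : 'M[R]_n :=
  inv_sqrt (Lneg + taup%:M) *m (Lpos + taum%:M) *m inv_sqrt (Lneg + taup%:M).

Definition min_cluster (n k : nat) (c : 'I_n -> 'I_k) : nat :=
  \big[minn/n]_(l < k) #|[set i | c i == l]|.

End SSBMDefs.

(* Main.v *)
Require Import Defs.
From HB Require Import structures.
From mathcomp Require Import all_boot all_order all_algebra.
From mathcomp Require Import boolp classical_sets reals.
From mathcomp Require Import complex spectral.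
From mathcomp Require Import ring lra.
Import Order.TTheory GRing.Theory Num.Theory.
Local Open Scope ring_scope.

Set Implicit Arguments. Unset Strict Implicit. Unset Printing Implicit Defensive.


Lemma sq_le_norm (R : realDomainType) (a b : R) : `|a| <= `|b| -> a ^+ 2 <= b ^+ 2.
Proof.
move=> h; rewrite -[a ^+ 2]ger0_norm ?sqr_ge0 // -[b ^+ 2]ger0_norm ?sqr_ge0 // !normrX !expr2.
by apply: ler_pM.
Qed.

Section Dot.
Variable R : realType.
Implicit Types (n : nat).

Definition dot n (u v : 'cV[R]_n) := \sum_i u i 0 * v i 0.

Lemma dot_mx n (u v : 'cV[R]_n) : (u^T *m v) 0 0 = dot u v.
Proof. by rewrite mxE; apply: eq_bigr => i _; rewrite mxE. Qed.
Lemma dotC n (u v : 'cV[R]_n) : dot u v = dot v u.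
Proof. by apply: eq_bigr => i _; rewrite mulrC. Qed.
Lemma dotDr n (u v w : 'cV[R]_n) : dot u (v + w) = dot u v + dot u w.
Proof. by rewrite /dot -big_split; apply: eq_bigr => i _; rewrite mxE mulrDr. Qed.
Lemma dotDl n (u v w : 'cV[R]_n) : dot (v + w) u = dot v u + dot w u.
Proof. by rewrite dotC dotDr !(dotC u). Qed.
Lemma dotZr n a (u v : 'cV[R]_n) : dot u (a *: v) = a * dot u v.
Proof. by rewrite /dot mulr_sumr; apply: eq_bigr => i _; rewrite mxE mulrCA. Qed.
Lemma dotZl n a (u v : 'cV[R]_n) : dot (a *: v) u = a * dot v u.
Proof. by rewrite dotC dotZr dotC. Qed.
Lemma dotNr n (u v : 'cV[R]_n) : dot u (- v) = - dot u v.
Proof. by rewrite -scaleN1r dotZr mulN1r. Qed.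
Lemma dotNl n (u v : 'cV[R]_n) : dot (- v) u = - dot v u.
Proof. by rewrite dotC dotNr dotC. Qed.
Lemma dotBr n (u v w : 'cV[R]_n) : dot u (v - w) = dot u v - dot u w.
Proof. by rewrite dotDr dotNr. Qed.
Lemma dotBl n (u v w : 'cV[R]_n) : dot (v - w) u = dot v u - dot w u.
Proof. by rewrite dotDl dotNl. Qed.
Lemma dot0r n (u : 'cV[R]_n) : dot u 0 = 0.
Proof. by rewrite /dot big1 // => i _; rewrite mxE mulr0. Qed.
Lemma dot0l n (u : 'cV[R]_n) : dot 0 u = 0.
Proof. by rewrite dotC dot0r. Qed.
Lemma dot_ge0 n (u : 'cV[R]_n) : 0 <= dot u u.
Proof. by apply: sumr_ge0 => i _; rewrite -expr2 sqr_ge0. Qed.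
Lemma dot_eq0 n (u : 'cV[R]_n) : (dot u u == 0) = (u == 0).
Proof.
apply/idP/idP; last by move/eqP->; rewrite dot0r.
move/eqP/psumr_eq0P => H; apply/eqP/matrixP => i j; rewrite ord1 mxE.
have /(_ i isT) : forall i, true -> u i 0 * u i 0 = 0 by apply: H => j0 _; rewrite -expr2 sqr_ge0.
by move/eqP; rewrite mulf_eq0 orbb => /eqP.
Qed.
Lemma dot_gt0 n (u : 'cV[R]_n) : u != 0 -> 0 < dot u u.
Proof. by move=> h; rewrite lt_def dot_ge0 dot_eq0 h. Qed.
Lemma dot_mulmx n (A : 'M[R]_n) (u v : 'cV[R]_n) : dot u (A *m v) = dot (A^T *m u) v.
Proof. by rewrite -!dot_mx trmx_mul trmxK mulmxA. Qed.
End Dot.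

Section Eig.
Variable R : realType.

Lemma Re_sum (I : finType) (f : I -> R[i]) : complex.Re (\sum_i f i) = \sum_i complex.Re (f i).
Proof. by elim/big_rec2: _ => // i y1 y2 _ <-; case: (f i); case: y2. Qed.
Lemma Im_sum (I : finType) (f : I -> R[i]) : complex.Im (\sum_i f i) = \sum_i complex.Im (f i).
Proof. by elim/big_rec2: _ => // i y1 y2 _ <-; case: (f i); case: y2. Qed.

Lemma sym_eigvec n (A : 'M[R]_n.+1) : A^T = A ->
  exists (l : R) (v : 'cV[R]_n.+1), A *m v = l *: v /\ v != 0.
Proof.
move=> sA.
pose AC := map_mx (real_complex R) A.
have [a /eigenvalueP [w wA wn0]] := @eigenvalue_closed R[i] _ AC (ltn0Sn n).
pose x : 'cV[R]_n.+1 := \col_j complex.Re (w 0 j).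
pose y : 'cV[R]_n.+1 := \col_j complex.Im (w 0 j).
have Ew : forall k, \sum_(j < n.+1) w 0 j * ((A j k)%:C)%C = a * w 0 k.
  move=> k; transitivity ((w *m AC) 0 k); first by rewrite mxE; apply: eq_bigr => j _; rewrite mxE.
  by rewrite wA mxE.
have Ax : A *m x = complex.Re a *: x - complex.Im a *: y.
  apply/matrixP => k i0; rewrite ord1 !mxE.
  have := congr1 (@complex.Re R) (Ew k); rewrite Re_sum => E.
  transitivity (\sum_j complex.Re (w 0 j * ((A j k)%:C)%C)).
    apply: eq_bigr => j _; rewrite mxE.
    have -> : A k j = A j k by rewrite -{1}sA mxE.
    by case: (w 0 j) => u v /=; rewrite mulr0 subr0 mulrC.
  rewrite E; case: a {wA Ew E} => u v; case: (w 0 k) => u' v' /=; by [].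
have Ay : A *m y = complex.Re a *: y + complex.Im a *: x.
  apply/matrixP => k i0; rewrite ord1 !mxE.
  have := congr1 (@complex.Im R) (Ew k); rewrite Im_sum => E.
  transitivity (\sum_j complex.Im (w 0 j * ((A j k)%:C)%C)).
    apply: eq_bigr => j _; rewrite mxE.
    have -> : A k j = A j k by rewrite -{1}sA mxE.
    by case: (w 0 j) => u v /=; rewrite mulr0 add0r mulrC.
  rewrite E; case: a {wA Ew E Ax} => u v; case: (w 0 k) => u' v' /=; by rewrite addrC.
have key : dot x (A *m y) = dot (A *m x) y by rewrite dot_mulmx sA.
rewrite Ay Ax dotDr dotBl !dotZr !dotZl in key.
have xy0 : x != 0 \/ y != 0.
  case: (eqVneq x 0) => [x0|]; last by left.
  case: (eqVneq y 0) => [y0|]; last by right.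
  exfalso; move/eqP: wn0; apply; apply/matrixP => i0 j; rewrite ord1 mxE.
  move/matrixP: x0 => /(_ j 0); move/matrixP: y0 => /(_ j 0); rewrite !mxE.
  by case: (w 0 j) => u v /= -> ->.
have pos : 0 < dot x x + dot y y.
  by case: xy0 => /dot_gt0 H; [have := dot_ge0 y | have := dot_ge0 x]; lra.
have b0 : complex.Im a = 0.
  have : complex.Im a * (dot x x + dot y y) = 0 by lra.
  by move/eqP; rewrite mulf_eq0 (gt_eqF pos) orbF => /eqP.
rewrite b0 scale0r subr0 in Ax; rewrite b0 scale0r addr0 in Ay.
by exists (complex.Re a); case: xy0 => H; [exists x | exists y].
Qed.

Lemma outer_mul n (w u : 'cV[R]_n) : w *m w^T *m u = dot w u *: w.
Proof. by rewrite -mulmxA [w^T *m u]mx11_scalar dot_mx mul_mx_scalar. Qed.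

Lemma dot_e n (u : 'cV[R]_n.+1) : dot (delta_mx 0 0) u = u 0 0.
Proof. by rewrite -dot_mx trmx_delta -rowE mxE. Qed.

Lemma householder n (v : 'cV[R]_n.+1) : dot v v = 1 ->
  exists H : 'M[R]_n.+1, [/\ H^T = H, H *m H = 1%:M & H *m delta_mx 0 0 = v].
Proof.
move=> vv; set e : 'cV[R]_n.+1 := delta_mx 0 0.
have ee : dot e e = 1 by rewrite dot_e mxE.
case: (eqVneq v e) => [->|ve]; first by exists 1%:M; rewrite trmx1 !mul1mx; split.
set w := v - e.
have wn0 : w != 0 by rewrite subr_eq0.
have wpos := dot_gt0 wn0.
have wwE : dot w w = 2 - 2 * v 0 0.
  rewrite /w dotBl !dotBr vv ee (dotC v e) dot_e; ring.
have we : dot w e = v 0 0 - 1 by rewrite /w dotBl dotC dot_e ee.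
have wE : v = w + e by rewrite /w subrK.
clearbody w.
set c := 2 / dot w w.
exists (1%:M - c *: (w *m w^T)); split.
- by rewrite linearB /= trmx1 linearZ /= trmx_mul trmxK.
- have WW : w *m w^T *m (w *m w^T) = dot w w *: (w *m w^T).
    by rewrite mulmxA outer_mul scalemxAl.
  have cc : c * (c * dot w w) = c + c.
    by rewrite /c; field; rewrite gt_eqF.
  rewrite mulmxBr !mulmxBl mul1mx mulmx1 -scalemxAl -!scalemxAr WW scalerA scalerA -mulrA cc scalerDl mul1mx.
  by rewrite opprB addrK subrK.
- rewrite mulmxBl mul1mx -scalemxAl outer_mul we scalerA.
  have -> : c * (v 0 0 - 1) = -1 by rewrite /c wwE; field; rewrite -wwE gt_eqF.
  by rewrite scaleN1r opprK wE addrC.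
Qed.

Lemma spectral n (A : 'M[R]_n) : A^T = A ->
  exists (U : 'M[R]_n) (d : 'rV[R]_n), U *m U^T = 1%:M /\ A = U^T *m diag_mx d *m U.
Proof.
elim: n A => [|n IH] A sA.
  exists 1%:M, 0; split; first by rewrite trmx1 mulmx1.
  by apply/matrixP => -[].
have [l [v0 [Av0 v0n0]]] := sym_eigvec sA.
set v := (Num.sqrt (dot v0 v0))^-1 *: v0.
have vv : dot v v = 1.
  rewrite /v dotZl dotZr mulrA -expr2 exprVn sqr_sqrtr ?dot_ge0 // mulVf //.
  by rewrite gt_eqF // dot_gt0.
have Av : A *m v = l *: v by rewrite /v -scalemxAr Av0 !scalerA mulrC.
have [H [sH HH He]] := householder vv.
set e : 'cV[R]_n.+1 := delta_mx 0 0.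
set B := H *m A *m H.
have sB : B^T = B by rewrite /B !trmx_mul sH sA mulmxA.
have Be : B *m e = l *: e.
  by rewrite /B -mulmxA He -mulmxA Av -scalemxAr -He mulmxA HH mul1mx.
have Bi0 : forall i, B i 0 = l * (i == 0)%:R.
  move=> i; move/matrixP: Be => /(_ i 0).
  rewrite -colE !mxE andbT => <-; by [].
have Bdef : H *m B *m H = A by rewrite /B !mulmxA HH mul1mx -mulmxA HH mulmx1.
clearbody B.
have l0 : lshift n (0 : 'I_1) = 0 :> 'I_n.+1 by apply/val_inj.
have r0 : forall j : 'I_n, (rshift 1 j == 0 :> 'I_n.+1) = false by [].
set B' : 'M[R]_(1 + n) := B.
set A' := drsubmx B'.
have sA' : A'^T = A' by rewrite /A' trmx_drsub sB.
have [U' [d' [UU' A'E]]] := IH A' sA'.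
have BE : B' = block_mx (l%:M : 'M_1) 0 0 A'.
  rewrite -[LHS]submxK; congr block_mx.
  - by apply/matrixP => i j; rewrite !ord1 !mxE l0 Bi0 !eqxx mulr1.
  -   - apply/matrixP => i j; rewrite !ord1 !mxE l0.
    by rewrite /B' -sB mxE Bi0 r0 mulr0.
  - by apply/matrixP => i j; rewrite !ord1 !mxE l0 Bi0 r0 mulr0.
pose U1 : 'M[R]_(1 + n) := block_mx (1%:M : 'M_1) 0 0 U'.
have d1 : diag_mx (l%:M : 'rV_1) = l%:M by apply/matrixP => i j; rewrite !ord1 !mxE.
have BU : B' = U1^T *m diag_mx (row_mx (l%:M : 'rV_1) d') *m U1.
  rewrite BE A'E /U1 tr_block_mx !trmx0 trmx1 diag_mx_row d1 !mulmx_block.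
  by rewrite !mul0mx !mulmx0 !add0r !addr0 mul1mx mulmx1 !mul0mx.
have UU1 : U1 *m U1^T = 1%:M.
  rewrite /U1 tr_block_mx !trmx0 trmx1 !mulmx_block !mul0mx !mulmx0 !add0r !addr0 mul1mx UU'.
  by rewrite -scalar_mx_block.
exists (U1 *m H), (row_mx (l%:M : 'rV_1) d'); split.
  by rewrite trmx_mul sH mulmxA -(mulmxA U1) HH mulmx1 UU1.
rewrite trmx_mul sH -Bdef.
change B with B'; rewrite BU.
by rewrite !mulmxA.
Qed.

Section Diag.
Variables (n : nat) (U : 'M[R]_n) (d : 'rV[R]_n).
Hypothesis UU : U *m U^T = 1%:M.
Let UtU : U^T *m U = 1%:M := mulmx1C UU.

Lemma dotU (x y : 'cV[R]_n) : dot (U *m x) (U *m y) = dot x y.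
Proof. by rewrite dot_mulmx mulmxA UtU mul1mx. Qed.
Lemma dotUt (x y : 'cV[R]_n) : dot (U^T *m x) (U^T *m y) = dot x y.
Proof. by rewrite dot_mulmx trmxK mulmxA UU mul1mx. Qed.
Lemma dot_diag (y : 'cV[R]_n) : dot y (diag_mx d *m y) = \sum_i d 0 i * y i 0 ^+ 2.
Proof. by apply: eq_bigr => i _; rewrite mul_diag_mx mxE expr2 mulrCA. Qed.
Lemma dot_diag2 (y : 'cV[R]_n) :
  dot (diag_mx d *m y) (diag_mx d *m y) = \sum_i d 0 i ^+ 2 * y i 0 ^+ 2.
Proof. by apply: eq_bigr => i _; rewrite mul_diag_mx !mxE -exprMn expr2. Qed.
Lemma dot_sum (y : 'cV[R]_n) : dot y y = \sum_i y i 0 ^+ 2.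
Proof. by apply: eq_bigr => i _; rewrite expr2. Qed.

Let A := U^T *m diag_mx d *m U.
Lemma qfA (x : 'cV[R]_n) : dot x (A *m x) = \sum_i d 0 i * (U *m x) i 0 ^+ 2.
Proof. by rewrite /A -!mulmxA dot_mulmx trmxK dot_diag. Qed.
Lemma nA (x : 'cV[R]_n) : dot (A *m x) (A *m x) = \sum_i d 0 i ^+ 2 * (U *m x) i 0 ^+ 2.
Proof. by rewrite /A -!mulmxA dotUt dot_diag2. Qed.
Lemma normUx (x : 'cV[R]_n) : dot x x = \sum_i (U *m x) i 0 ^+ 2.
Proof. by rewrite -dot_sum dotU. Qed.

Definition evec (i : 'I_n) : 'cV[R]_n := U^T *m delta_mx i 0.
Lemma evec_norm i : dot (evec i) (evec i) = 1.
Proof. by rewrite /evec dotUt dot_sum (bigD1 i) //= big1 => [|j /negbTE ji]; rewrite !mxE ?eqxx ?ji ?expr0n ?addr0 //= expr1n. Qed.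
Lemma evecP i : A *m evec i = d 0 i *: evec i.
Proof.
rewrite /A /evec -!mulmxA [U *m (U^T *m _)]mulmxA UU mul1mx.
rewrite [diag_mx d *m _]mul_diag_mx scalemxAr; congr (_ *m _).
by apply/matrixP => a b; rewrite !mxE; case: eqP => [->|]; rewrite ?mulr1 ?mulr0.
Qed.
Lemma evec_qf i : dot (evec i) (A *m evec i) = d 0 i.
Proof. by rewrite evecP dotZr evec_norm mulr1. Qed.
End Diag.

Lemma sym_nbound n (A : 'M[R]_n) c : A^T = A -> 0 <= c ->
  (forall x, `|dot x (A *m x)| <= c * dot x x) ->
  forall x, dot (A *m x) (A *m x) <= c ^+ 2 * dot x x.
Proof.
move=> sA c0 H x; have [U [d [UU AE]]] := spectral sA.
have di : forall i, d 0 i ^+ 2 <= c ^+ 2.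
  move=> i; have := H (evec U i); rewrite {1}AE evec_qf // evec_norm // mulr1.
  move=> h; apply: sq_le_norm; rewrite (ger0_norm c0); exact: h.
rewrite AE nA // (normUx UU) mulr_sumr; apply: ler_sum => i _.
by apply: ler_wpM2r; [exact: sqr_ge0 | exact: di].
Qed.

Lemma sym_eig n (A : 'M[R]_n.+1) : A^T = A ->
  exists (v : 'cV[R]_n.+1) (l : R), [/\ dot v v = 1, A *m v = l *: v &
    forall x, dot (A *m x) (A *m x) <= l ^+ 2 * dot x x].
Proof.
move=> sA; have [U [d [UU AE]]] := spectral sA.
pose F := fun i : 'I_n.+1 => `|d 0 i|.
have [i _ imax] := @arg_maxP _ R _ (0 : 'I_n.+1) predT F isT.
exists (evec U i), (d 0 i); split; first exact: evec_norm.
  by rewrite AE evecP.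
move=> x; rewrite AE nA // (normUx UU) mulr_sumr; apply: ler_sum => j _.
apply: ler_wpM2r; first exact: sqr_ge0.
exact: sq_le_norm (imax j isT).
Qed.

Lemma sqrt_exists n (A : 'M[R]_n) : A^T = A -> (forall x, 0 <= dot x (A *m x)) ->
  exists S : 'M[R]_n, [/\ S^T = S, (forall x, 0 <= dot x (S *m x)) & S *m S = A].
Proof.
move=> sA psdA; have [U [d [UU AE]]] := spectral sA.
have d0 : forall i, 0 <= d 0 i.
  by move=> i; have := psdA (evec U i); rewrite {1}AE evec_qf.
pose s := \row_i Num.sqrt (d 0 i).
exists (U^T *m diag_mx s *m U); split.
- by rewrite !trmx_mul trmxK tr_diag_mx mulmxA.
- move=> x; rewrite qfA //; apply: sumr_ge0 => i _.
  by rewrite mxE mulr_ge0 ?sqrtr_ge0 ?sqr_ge0.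
- rewrite AE -!mulmxA; congr (_ *m _); rewrite !mulmxA.
  rewrite -[_ *m U *m U^T]mulmxA UU mulmx1 mulmx_diag; congr (_ *m _); congr diag_mx.
  by apply/matrixP => a b; rewrite ord1 !mxE -expr2 sqr_sqrtr.
Qed.

Lemma sqrt_lower n (S : 'M[R]_n) t : S^T = S -> (forall x, 0 <= dot x (S *m x)) ->
  (forall x, t * dot x x <= dot x (S *m S *m x)) ->
  forall x, Num.sqrt t * dot x x <= dot x (S *m x).
Proof.
move=> sS psdS low x; have [U [d [UU SE]]] := spectral sS.
have d0 : forall i, 0 <= d 0 i.
  by move=> i; have := psdS (evec U i); rewrite {1}SE evec_qf.
have di : forall i, Num.sqrt t <= d 0 i.
  move=> i; have Sf : S *m evec U i = d 0 i *: evec U i by rewrite {1}SE evecP.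
  have := low (evec U i); rewrite evec_norm // mulr1 -mulmxA.
  rewrite Sf -scalemxAr Sf scalerA dotZr evec_norm // mulr1.
  move=> /ler_wsqrtr; rewrite -expr2 sqrtr_sqr ger0_norm //.
rewrite SE qfA // (normUx UU) mulr_sumr; apply: ler_sum => i _.
by apply: ler_wpM2r; [exact: sqr_ge0 | exact: di].
Qed.
End Eig.


Section Norms.
Variable R : realType.
Implicit Types n : nat.

Lemma vnormE n (x : 'cV[R]_n) : vnorm x = Num.sqrt (dot x x).
Proof. by rewrite /vnorm dot_sum. Qed.
Lemma vnorm_ge0 n (x : 'cV[R]_n) : 0 <= vnorm x.
Proof. by rewrite vnormE sqrtr_ge0. Qed.
Lemma vnorm_sq n (x : 'cV[R]_n) : vnorm x ^+ 2 = dot x x.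
Proof. by rewrite vnormE sqr_sqrtr // dot_ge0. Qed.
Lemma vnormZ n a (x : 'cV[R]_n) : vnorm (a *: x) = `|a| * vnorm x.
Proof. by rewrite !vnormE dotZl dotZr mulrA -expr2 sqrtrM ?sqr_ge0 // sqrtr_sqr. Qed.
Lemma vnorm0 n : vnorm (0 : 'cV[R]_n) = 0.
Proof. by rewrite vnormE dot0r sqrtr0. Qed.

Lemma CS n (u v : 'cV[R]_n) : dot u v ^+ 2 <= dot u u * dot v v.
Proof.
case: (eqVneq v 0) => [->|vn0]; first by rewrite !dot0r expr0n mulr0.
have vv := dot_gt0 vn0.
have h := dot_ge0 (dot v v *: u - dot u v *: v).
rewrite dotBl !dotBr !dotZl !dotZr (dotC v u) in h.
have h2 : 0 <= dot v v * (dot u u * dot v v - dot u v ^+ 2) by nra.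
by rewrite pmulr_rge0 // subr_ge0 in h2.
Qed.

Lemma dot_le n (u v : 'cV[R]_n) : `|dot u v| <= vnorm u * vnorm v.
Proof.
rewrite !vnormE -sqrtrM ?dot_ge0 // -sqrtr_sqr; apply: ler_wsqrtr; exact: CS.
Qed.

Lemma vnormD n (u v : 'cV[R]_n) : vnorm (u + v) <= vnorm u + vnorm v.
Proof.
rewrite [vnorm (u + v)]vnormE -(ger0_norm (addr_ge0 (vnorm_ge0 u) (vnorm_ge0 v))) -sqrtr_sqr.
apply: ler_wsqrtr; rewrite dotDl !dotDr (dotC v u) sqrrD !vnorm_sq.
have := dot_le u v; have := ler_norm (dot u v); lra.
Qed.

Definition bnd n (M : 'M[R]_n) (c : R) := forall x, vnorm (M *m x) <= c * vnorm x.

Lemma bnd_sq n (M : 'M[R]_n) c : 0 <= c -> (forall x, dot (M *m x) (M *m x) <= c ^+ 2 * dot x x) -> bnd M c.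
Proof.
move=> c0 h x; rewrite !vnormE -(ger0_norm c0) -sqrtr_sqr -sqrtrM ?sqr_ge0 //.
exact: ler_wsqrtr.
Qed.

Lemma bnd_mul n (M N : 'M[R]_n) a b : 0 <= a -> bnd M a -> bnd N b -> bnd (M *m N) (a * b).
Proof.
move=> a0 hM hN x; rewrite -mulmxA; apply: le_trans (hM _) _.
by rewrite -mulrA ler_wpM2l.
Qed.

Lemma bnd_add n (M N : 'M[R]_n) a b : bnd M a -> bnd N b -> bnd (M + N) (a + b).
Proof.
move=> hM hN x; rewrite mulmxDl; apply: le_trans (vnormD _ _) _.
by rewrite mulrDl lerD.
Qed.

Lemma bnd_opp n (M : 'M[R]_n) a : bnd M a -> bnd (- M) a.
Proof. by move=> h x; rewrite mulNmx -scaleN1r vnormZ normrN normr1 mul1r. Qed.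

Lemma bnd_le n (M : 'M[R]_n) a b : a <= b -> bnd M a -> bnd M b.
Proof. move=> ab h x; apply: le_trans (h x) _; by rewrite ler_wpM2r ?vnorm_ge0. Qed.

Lemma opnorm_le n (M : 'M[R]_n) c : 0 <= c -> bnd M c -> opnorm M <= c.
Proof.
move=> c0 h; apply: ge_sup.
  by exists 0, 0 => //=; rewrite ?vnorm0 ?mulmx0 ?vnorm0.
move=> _ [x /= x1 <-]; apply: le_trans (h x) _.
by rewrite -[leRHS]mulr1 ler_wpM2l.
Qed.

Lemma opnorm_bnd n (M : 'M[R]_n) c : 0 <= c -> bnd M c -> bnd M (opnorm M).
Proof.
move=> c0 h.
have ub : forall x : 'cV[R]_n, vnorm x <= 1 -> vnorm (M *m x) <= opnorm M.
  move=> x x1; apply: (ub_le_sup (E := [set vnorm (M *m x) | x in [set x : 'cV[R]_n | vnorm x <= 1]])).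
    exists c => _ [y /= y1 <-]; apply: le_trans (h y) _; by rewrite -[leRHS]mulr1 ler_wpM2l.
  by exists x.
move=> x; case: (eqVneq (vnorm x) 0) => [x0|xn0].
  have : x = 0 by apply/eqP; rewrite -dot_eq0 -vnorm_sq x0 expr0n.
  by move=> ->; rewrite mulmx0 !vnorm0 mulr0.
have xp : 0 < vnorm x by rewrite lt_def xn0 vnorm_ge0.
have := ub ((vnorm x)^-1 *: x); rewrite vnormZ ger0_norm ?invr_ge0 ?vnorm_ge0 // mulVf //.
rewrite lexx -scalemxAr vnormZ ger0_norm ?invr_ge0 ?vnorm_ge0 // => /(_ isT).
by rewrite ler_pdivrMl // mulrC.
Qed.
End Norms.


Section Lap.
Variable R : realType.

Lemma Lsym_sym n (A : 'M[R]_n) : A^T = A -> (Lsym A)^T = Lsym A.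
Proof.
move=> sA; rewrite /Lsym linearB /= trmx1 !trmx_mul /diag_inv_sqrt tr_diag_mx sA.
by rewrite mulmxA.
Qed.

Lemma Lsym_qf n (A : 'M[R]_n) : A^T = A -> (forall i j, 0 <= A i j) ->
  forall x, 0 <= dot x (Lsym A *m x) <= 2 * dot x x.
Proof.
move=> sA A0 x.
set Dh := diag_inv_sqrt (deg A).
have sDh : Dh^T = Dh by rewrite /Dh /diag_inv_sqrt tr_diag_mx.
set y := Dh *m x.
have yE : forall i, y i 0 = (Num.sqrt (deg A i))^-1 * x i 0.
  by move=> i; rewrite /y /Dh /diag_inv_sqrt mul_diag_mx !mxE.
have dE : dot x (Lsym A *m x) = dot x x - dot y (A *m y).
  rewrite /Lsym mulmxBl mul1mx dotBr; congr (_ - _).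
  by rewrite -!mulmxA [LHS]dot_mulmx -/Dh sDh.
have d0 : forall i, 0 <= deg A i by move=> i; apply: sumr_ge0 => j _.
clearbody y.
have E : dot y (A *m y) = \sum_i \sum_j A i j * (y i 0 * y j 0).
  apply: eq_bigr => i _; rewrite mxE mulr_sumr; apply: eq_bigr => j _.
  by rewrite mulrCA mulrA. 
pose W := \sum_i \sum_j A i j * (y i 0 ^+ 2 + y j 0 ^+ 2).
have WE : W = 2 * \sum_i deg A i * y i 0 ^+ 2.
  have -> : W = \sum_i \sum_j A i j * y i 0 ^+ 2 + \sum_j \sum_i A i j * y j 0 ^+ 2.
    rewrite [X in _ = _ + X]exchange_big /= -big_split; apply: eq_bigr => i _.
    by rewrite -big_split; apply: eq_bigr => j _; rewrite mulrDr.
  have h1 : \sum_i \sum_j A i j * y i 0 ^+ 2 = \sum_i deg A i * y i 0 ^+ 2.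
    by apply: eq_bigr => i _; rewrite /deg mulr_suml.
  have h2 : \sum_j \sum_i A i j * y j 0 ^+ 2 = \sum_i deg A i * y i 0 ^+ 2.
    apply: eq_bigr => j _; rewrite /deg mulr_suml; apply: eq_bigr => i _.
    by rewrite -{1}sA mxE.
  by rewrite h1 h2 mulr2n mulrDl mul1r.
have up : 2 * dot y (A *m y) <= W.
  rewrite E mulr_sumr; apply: ler_sum => i _; rewrite mulr_sumr; apply: ler_sum => j _.
  have := A0 i j; have := sqr_ge0 (y i 0 - y j 0); nra.
have lo : - W <= 2 * dot y (A *m y).
  rewrite E mulr_sumr /W -sumrN; apply: ler_sum => i _; rewrite mulr_sumr -sumrN; apply: ler_sum => j _.
  have := A0 i j; have := sqr_ge0 (y i 0 + y j 0); nra.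
have Wx : \sum_i deg A i * y i 0 ^+ 2 <= dot x x.
  rewrite dot_sum; apply: ler_sum => i _; rewrite yE exprMn exprVn sqr_sqrtr // mulrA.
  case: (eqVneq (deg A i) 0) => [->|dn0]; first by rewrite mul0r mul0r sqr_ge0.
  by rewrite mulfV // mul1r.
rewrite dE; apply/andP; split; lra.
Qed.

Lemma P_qf n (A : 'M[R]_n) t : A^T = A -> (forall i j, 0 <= A i j) ->
  forall x, t * dot x x <= dot x ((Lsym A + t%:M) *m x) <= (2 + t) * dot x x.
Proof.
move=> sA A0 x; have /andP [h1 h2] := Lsym_qf sA A0 x.
rewrite mulmxDl mul_scalar_mx dotDr dotZr; apply/andP; split; lra.
Qed.

Lemma psdE n (S : 'M[R]_n) : psd S <-> forall x, 0 <= dot x (S *m x).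
Proof. by split => h x; have := h x; rewrite -mulmxA dot_mx. Qed.

Lemma EA_sym n k (c : 'I_n -> 'I_k) (p eta : R) : (EApos c p eta)^T = EApos c p eta /\ (EAneg c p eta)^T = EAneg c p eta.
Proof.
by split; apply/matrixP => i j; rewrite !mxE eq_sym [c j == _]eq_sym.
Qed.

Lemma EA_ge0 n k (c : 'I_n -> 'I_k) (p eta : R) : 0 <= p -> 0 <= eta <= 1 ->
  (forall i j, 0 <= EApos c p eta i j) /\ (forall i j, 0 <= EAneg c p eta i j).
Proof.
move=> p0 /andP [e0 e1]; have e1' : 0 <= 1 - eta by lra.
by split => i j; rewrite !mxE; case: eqP => _ //; case: eqP => _; rewrite mulr_ge0.
Qed.
End Lap.


Section Abs.
Variable R : realType.

Lemma sqrt_facts n (P : 'M[R]_n) t : P^T = P -> 0 < t ->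
  (forall x, t * dot x x <= dot x (P *m x)) ->
  [/\ (psd_sqrt P)^T = psd_sqrt P, (forall x, 0 <= dot x (psd_sqrt P *m x)),
      psd_sqrt P *m psd_sqrt P = P,
      (forall x, Num.sqrt t * dot x x <= dot x (psd_sqrt P *m x)) & psd_sqrt P \in unitmx].
Proof.
move=> sP t0 low.
have psdP : forall x, 0 <= dot x (P *m x).
  by move=> x; apply: le_trans (low x); rewrite mulr_ge0 ?dot_ge0 // ltW.
have [S0 [sS0 pS0 SS0]] := sqrt_exists sP psdP.
have : ([set S : 'M[R]_n | S^T = S /\ psd S /\ S *m S = P])%classic (psd_sqrt P).
  by rewrite /psd_sqrt; apply: xgetPex; exists S0; split => //; split => //; apply/psdE.
move=> [sS [/psdE pS SS]].
have lowS := sqrt_lower sS pS (t := t).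
have lS : forall x, Num.sqrt t * dot x x <= dot x (psd_sqrt P *m x).
  by apply: lowS => x; rewrite SS.
split => //.
rewrite -row_free_unit; apply: inj_row_free => v vS.
have : v^T = 0.
  have h := lS v^T.
  have : psd_sqrt P *m v^T = 0 by rewrite -sS -trmx_mul vS trmx0.
  move=> z; rewrite z dot0r in h.
  have st : 0 < Num.sqrt t by rewrite sqrtr_gt0.
  apply/eqP; rewrite -dot_eq0 eq_le dot_ge0 andbT.
  by rewrite -(pmulr_rle0 _ st).
by move/(congr1 trmx); rewrite trmxK trmx0.
Qed.

Lemma inv_bnd n (S P : 'M[R]_n) t : S^T = S -> S *m S = P -> S \in unitmx -> 0 < t ->
  (forall x, t * dot x x <= dot x (P *m x)) -> bnd (invmx S) (Num.sqrt t)^-1.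
Proof.
move=> sS SS uS t0 low; apply: bnd_sq; first by rewrite invr_ge0 sqrtr_ge0.
move=> w; set z := invmx S *m w.
have wE : w = S *m z by rewrite /z mulmxA mulmxV // mul1mx.
clearbody z.
have ww : dot w w = dot z (P *m z).
  by rewrite wE dot_mulmx sS mulmxA SS dotC.
have h := low z; rewrite -ww in h.
rewrite exprVn sqr_sqrtr; last exact: ltW.
have -> : dot z z = t^-1 * (t * dot z z) by rewrite mulrA mulVf ?mul1r // gt_eqF.
by apply: ler_wpM2l => //; rewrite invr_ge0 ltW.
Qed.

Lemma D_bound n (P Pb S Sb : 'M[R]_n.+1) DP t :
  S^T = S -> Sb^T = Sb -> S *m S = P -> Sb *m Sb = Pb -> 0 < t ->
  (forall x, Num.sqrt t * dot x x <= dot x (S *m x)) ->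
  (forall x, Num.sqrt t * dot x x <= dot x (Sb *m x)) ->
  bnd (P - Pb) DP ->
  exists L, [/\ 0 <= L, bnd (S - Sb) L, L ^+ 2 <= DP & 2 * Num.sqrt t * L <= DP].
Proof.
move=> sS sSb SS SSb t0 lS lSb bE.
set D := S - Sb.
have sD : D^T = D by rewrite /D linearB /= sS sSb.
have [v [l [vv Dv Dbnd]]] := sym_eig sD.
set a := dot v (S *m v); set b := dot v (Sb *m v).
have st : 0 < Num.sqrt t by rewrite sqrtr_gt0.
have ha : Num.sqrt t <= a by have := lS v; rewrite vv mulr1.
have hb : Num.sqrt t <= b by have := lSb v; rewrite vv mulr1.
have ab : a - b = l by rewrite /a /b -dotBr -mulmxBl -/D Dv dotZr vv mulr1.
have PE : P - Pb = S *m D + D *m Sb.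
  by rewrite /D mulmxBr mulmxBl SS SSb addrA subrK.
have Ev : dot v ((P - Pb) *m v) = l * (a + b).
  rewrite PE mulmxDl dotDr -mulmxA Dv -scalemxAr dotZr -mulmxA dot_mulmx sD Dv dotZl.
  by rewrite /a /b mulrDr.
have vn : vnorm v = 1 by rewrite vnormE vv sqrtr1.
have hE : `|l * (a + b)| <= DP.
  rewrite -Ev; apply: le_trans (dot_le _ _) _; rewrite vn mul1r.
  by apply: le_trans (bE v) _; rewrite vn mulr1.
have abp : 0 <= a + b by have := sqrtr_ge0 t; lra.
rewrite normrM (ger0_norm abp) in hE.
have la : `|l| <= a + b.
  rewrite -ab; apply: le_trans (ler_normB _ _) _.
  by rewrite !ger0_norm; [lra | have := sqrtr_ge0 t; lra | have := sqrtr_ge0 t; lra].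
exists `|l|; split.
- exact: normr_ge0.
- by apply: bnd_sq => // x; rewrite -normrX ger0_norm ?sqr_ge0 //; exact: Dbnd.
- apply: le_trans hE; rewrite expr2; apply: ler_wpM2l => //; exact: normr_ge0.
- apply: le_trans hE; rewrite mulrC; apply: ler_wpM2l; first exact: normr_ge0.
  lra.
Qed.
End Abs.


Section Fin.
Variable R : realType.

Lemma arith (taup L DP DQ taum alpha : R) : 0 < taup -> 0 <= L -> L ^+ 2 <= DP ->
  2 * Num.sqrt taup * L <= DP -> 0 <= taum -> 1 + taum <= alpha -> 0 <= DQ ->
  (Num.sqrt taup)^-1 * DQ * (Num.sqrt taup)^-1 + ((Num.sqrt taup)^-1 * L * (Num.sqrt taup)^-1 * (2 + taum) * (Num.sqrt taup)^-1
   + (Num.sqrt taup)^-1 * (2 + taum) * ((Num.sqrt taup)^-1 * L * (Num.sqrt taup)^-1))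
  <= (alpha + DQ) / taup * (DP / taup + 2 * Num.sqrt (DP / taup)) + DQ / taup.
Proof.
move=> tp L0 L2 L3 tm al DQ0.
set s := Num.sqrt taup.
have s0 : 0 < s by rewrite sqrtr_gt0.
have ss : s ^+ 2 = taup by rewrite sqr_sqrtr // ltW.
have DP0 : 0 <= DP by apply: le_trans L2; rewrite sqr_ge0.
set u := Num.sqrt (DP / taup).
have u0 : 0 <= u by rewrite sqrtr_ge0.
have uu : u ^+ 2 = DP / taup by rewrite sqr_sqrtr // divr_ge0 // ltW.
set m := L / s.
have m0 : 0 <= m by rewrite divr_ge0 // ltW.
have m2 : m ^+ 2 <= u ^+ 2.
  rewrite uu /m expr_div_n ss; apply: ler_wpM2r => //; rewrite invr_ge0 ltW //.
have mu : m <= u.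
  by rewrite -(ger0_norm m0) -(ger0_norm u0) -[`|m| <= _]ler_sqr ?nnegrE ?normr_ge0 // !real_normK ?num_real.
have m3 : 2 * m <= u ^+ 2.
  have -> : 2 * m = (2 * s * L) / taup by rewrite /m -ss; field; rewrite gt_eqF.
  by rewrite uu; apply: ler_wpM2r => //; rewrite invr_ge0 ltW.
have key : 4 * m <= u ^+ 2 + 2 * u.
  case: (lerP u 2) => hu.
    have : u ^+ 2 <= 2 * u by rewrite expr2 ler_wpM2r.
    lra.
  have : 2 * u <= u ^+ 2 by rewrite expr2 ler_wpM2r // ltW.
  lra.
have al0 : 0 <= alpha by lra.
have p1 : 0 <= (2 * alpha - 2 - taum) * m by rewrite mulr_ge0 //; lra.
have p2 : 0 <= alpha * (u ^+ 2 + 2 * u - 4 * m) by rewrite mulr_ge0 //; lra.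
have p3 : 0 <= DQ * (u ^+ 2 + 2 * u) by rewrite mulr_ge0 // addr_ge0 ?sqr_ge0 // mulr_ge0.
have core : 2 * (2 + taum) * m <= (alpha + DQ) * (u ^+ 2 + 2 * u) by nra.
have -> : (Num.sqrt taup)^-1 * DQ * (Num.sqrt taup)^-1 + ((Num.sqrt taup)^-1 * L * (Num.sqrt taup)^-1 * (2 + taum) * (Num.sqrt taup)^-1
   + (Num.sqrt taup)^-1 * (2 + taum) * ((Num.sqrt taup)^-1 * L * (Num.sqrt taup)^-1))
   = (DQ + 2 * (2 + taum) * m) / taup.
  by rewrite -/s /m -ss; field; rewrite gt_eqF.
rewrite -uu -/u.
have -> : (alpha + DQ) / taup * (u ^+ 2 + 2 * u) + DQ / taup = ((alpha + DQ) * (u ^+ 2 + 2 * u) + DQ) / taup.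
  by field; rewrite gt_eqF.
apply: ler_wpM2r; first by rewrite invr_ge0 ltW.
lra.
Qed.

Lemma sym_bnd n (M : 'M[R]_n.+1) : M^T = M -> exists c, 0 <= c /\ bnd M c.
Proof.
move=> sM; have [v [l [_ _ h]]] := sym_eig sM.
exists `|l|; split; first exact: normr_ge0.
by apply: bnd_sq => // x; rewrite -normrX ger0_norm ?sqr_ge0 //; exact: h.
Qed.

Lemma opnorm_sym n (M : 'M[R]_n.+1) D : M^T = M -> opnorm M <= D -> bnd M D.
Proof.
move=> sM hD; have [c [c0 hc]] := sym_bnd sM.
exact: bnd_le hD (opnorm_bnd c0 hc).
Qed.

Lemma bnd_ge0 n (M : 'M[R]_n.+1) D : bnd M D -> 0 <= D.
Proof.
move=> h; set e : 'cV[R]_n.+1 := delta_mx 0 0.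
have en : vnorm e = 1 by rewrite vnormE dot_e mxE sqrtr1.
by have := h e; rewrite en mulr1; apply: le_trans; exact: vnorm_ge0.
Qed.

Lemma abstract_bound n (P Pb Q Qb : 'M[R]_n.+1) taup taum DP DQ alpha :
  P^T = P -> Pb^T = Pb -> Q^T = Q -> Qb^T = Qb -> 0 < taup -> 0 <= taum -> 1 + taum <= alpha ->
  (forall x, taup * dot x x <= dot x (P *m x)) ->
  (forall x, taup * dot x x <= dot x (Pb *m x)) ->
  (forall x, taum * dot x x <= dot x (Qb *m x) <= (2 + taum) * dot x x) ->
  opnorm (P - Pb) <= DP -> opnorm (Q - Qb) <= DQ ->
  opnorm (invmx (psd_sqrt P) *m Q *m invmx (psd_sqrt P)
          - invmx (psd_sqrt Pb) *m Qb *m invmx (psd_sqrt Pb))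
  <= (alpha + DQ) / taup * (DP / taup + 2 * Num.sqrt (DP / taup)) + DQ / taup.
Proof.
move=> sP sPb sQ sQb tp tm al lP lPb lQb hDP hDQ.
have [sS pS SS lS uS] := sqrt_facts sP tp lP.
have [sSb pSb SSb lSb uSb] := sqrt_facts sPb tp lPb.
set S := psd_sqrt P in sS pS SS lS uS *.
set Sb := psd_sqrt Pb in sSb pSb SSb lSb uSb *.
set X := invmx S; set Y := invmx Sb.
set r := (Num.sqrt taup)^-1.
have r0 : 0 <= r by rewrite invr_ge0 sqrtr_ge0.
have bX : bnd X r by apply: inv_bnd SS uS tp lP.
have bY : bnd Y r by apply: inv_bnd SSb uSb tp lPb.
have bE : bnd (P - Pb) DP by apply: opnorm_sym => //; rewrite linearB /= sP sPb.
have bQ : bnd (Q - Qb) DQ by apply: opnorm_sym => //; rewrite linearB /= sQ sQb.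
have DQ0 := bnd_ge0 bQ.
have c0 : 0 <= 2 + taum by lra.
have bQb : bnd Qb (2 + taum).
  apply: bnd_sq => //; apply: sym_nbound => // x.
  have /andP [h1 h2] := lQb x.
  have : 0 <= taum * dot x x by rewrite mulr_ge0 ?dot_ge0.
  move=> h3; rewrite ler_norml; apply/andP; split; lra.
have [L [L0 bD L2 L3]] := D_bound sS sSb SS SSb tp lS lSb bE.
have XY : X - Y = X *m (- (S - Sb)) *m Y.
  rewrite mulmxN mulNmx mulmxBr mulmxBl /X /Y mulVmx // mul1mx -mulmxA mulmxV // mulmx1.
  by rewrite opprB.
have bXY : bnd (X - Y) (r * L * r).
  by rewrite XY; apply: bnd_mul; [rewrite mulr_ge0 | apply: bnd_mul => //; apply: bnd_opp |].
have dec : X *m Q *m X - Y *m Qb *m Y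
   = X *m (Q - Qb) *m X + ((X - Y) *m Qb *m X + Y *m Qb *m (X - Y)).
  by rewrite !mulmxBl !mulmxBr !mulmxBl !addrA !subrK.
apply: le_trans (arith tp L0 L2 L3 tm al DQ0).
apply: opnorm_le.
  by rewrite -/r !addr_ge0 ?mulr_ge0.
rewrite -/r dec; apply: bnd_add.
  apply: bnd_mul => //; first by rewrite mulr_ge0.
  by apply: bnd_mul.
apply: bnd_add.
  apply: bnd_mul => //; first by rewrite !mulr_ge0.
  by apply: bnd_mul => //; rewrite !mulr_ge0.
apply: bnd_mul => //; first by rewrite !mulr_ge0.
by apply: bnd_mul.
Qed.
End Fin.

Unset Implicit Arguments.

Lemma min_cluster_ge1 (n k : nat) (c : 'I_n -> 'I_k) :
  (0 < n)%N -> (forall l : 'I_k, exists i : 'I_n, c i = l) -> (0 < min_cluster c)%N.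
Proof.
move=> n0 hs; rewrite /min_cluster; elim/big_ind: _ => //.
  by move=> x y hx hy; rewrite leq_min hx hy.
move=> l _; have [i ci] := hs l; apply/card_gt0P; exists i; by rewrite inE /=; apply/eqP.
Qed.

Theorem mainTheorem14 (R : realType) (n k : nat) (c : 'I_n -> 'I_k)
    (p eta taup taum DeltaP DeltaQ : R) (Apos Aneg : 'M[R]_n) :
  (2 <= n)%N -> (2 <= k)%N ->
  0 < p <= 1 -> 0 <= eta < 1 / 2 ->
  (forall l : 'I_k, exists i : 'I_n, c i = l) ->
  (* Apos, Aneg : adjacency matrices of a realization (simple signed graph) *)
  (forall i j, Apos i j = 0 \/ Apos i j = 1) ->
  (forall i j, Aneg i j = 0 \/ Aneg i j = 1) ->
  Apos^T = Apos -> Aneg^T = Aneg ->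
  (forall i, Apos i i = 0) -> (forall i, Aneg i i = 0) ->
  (forall i j, Apos i j * Aneg i j = 0) ->
  (forall i, 0 < deg Apos i) -> (forall i, 0 < deg Aneg i) ->
  0 < taup -> 0 <= taum ->
  let P := Lsym Aneg + taup%:M in
  let Pbar := Lsym (EAneg c p eta) + taup%:M in
  let Q := Lsym Apos + taum%:M in
  let Qbar := Lsym (EApos c p eta) + taum%:M in
  opnorm (P - Pbar) <= DeltaP ->
  opnorm (Q - Qbar) <= DeltaQ ->
  let s := (min_cluster c)%:R / n%:R in
  let dsp := p * (n%:R * s * (1 - 2 * eta) + n%:R * eta - (1 - eta)) in
  let alpha := 1 + taum + p * (1 - eta) / dsp in
  opnorm (Tmat (Lsym Apos) (Lsym Aneg) taup taum
          - Tmat (Lsym (EApos c p eta)) (Lsym (EAneg c p eta)) taup taum)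
  <= (alpha + DeltaQ) / taup * (DeltaP / taup + 2 * Num.sqrt (DeltaP / taup))
     + DeltaQ / taup.
Proof.
move: c Apos Aneg; case: n => [|n] c Apos Aneg hn; first by [].
move=> hk /andP [p0 p1] /andP [e0 e1] hs hApos hAneg sApos sAneg _ _ _ _ _ tp tm.
move=> P Pbar Q Qbar hDP hDQ; cbv zeta.
pose s := (min_cluster c)%:R / n.+1%:R : R.
pose dsp := p * (n.+1%:R * s * (1 - 2 * eta) + n.+1%:R * eta - (1 - eta)).
pose alpha := 1 + taum + p * (1 - eta) / dsp.
have m1 := @min_cluster_ge1 _ _ c (ltn0Sn n) hs.
have m1R : 1 <= (min_cluster c)%:R :> R by rewrite ler1n.
have nR : 2 <= n.+1%:R :> R by rewrite ler_nat.
have ns : n.+1%:R * s = (min_cluster c)%:R by rewrite /s mulrC divfK // pnatr_eq0.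
have dsp0 : 0 <= dsp.
  rewrite /dsp ns; apply: mulr_ge0; first exact: ltW.
  have h1 : 0 <= ((min_cluster c)%:R - 1) * (1 - 2 * eta) by apply: mulr_ge0; lra.
  have h2 : 0 <= (n.+1%:R - 1) * eta :> R by apply: mulr_ge0; lra.
  lra.
have al : 1 + taum <= alpha.
  rewrite /alpha -[leLHS]addr0 lerD2l; apply: divr_ge0 => //; apply: mulr_ge0; lra.
have [sEp sEn] := EA_sym c p eta.
have e1' : 0 <= eta <= 1 by apply/andP; split; lra.
have [gEp gEn] := EA_ge0 c (ltW p0) e1'.
have sym_add : forall (M : 'M[R]_n.+1) t, M^T = M -> (M + t%:M)^T = M + t%:M.
  by move=> M t hM; rewrite linearD /= hM tr_scalar_mx.
have g01 : forall (M : 'M[R]_n.+1), (forall i j, M i j = 0 \/ M i j = 1) -> forall i j, 0 <= M i j.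
  by move=> M hM i j; case: (hM i j) => ->.
rewrite /Tmat /inv_sqrt.
apply: (abstract_bound (taum := taum) (alpha := alpha)) => //.
- exact/sym_add/Lsym_sym.
- exact/sym_add/Lsym_sym.
- exact/sym_add/Lsym_sym.
- exact/sym_add/Lsym_sym.
- by move=> x; have /andP [] := P_qf taup sAneg (g01 _ hAneg) x.
- by move=> x; have /andP [] := P_qf taup sEn gEn x.
- exact: P_qf.
Qed.
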